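(* As $n\to\infty$, $B_2(n,2,3;3)=\Theta(2^n)$.
   Context: For a prime power $q$, $\mathcal{G}_q(n,k)$ denotes the set of all $k$-dimensional subspaces of $\mathbb{F}_q^n$. An $\alpha$-$(n,k,\delta)_q^c$ covering Grassmannian code is a subset $\mathcal{C}\subseteq\mathcal{G}_q(n,k)$ (no repeated codewords) such that every set of $\alpha$ distinct codewords of $\mathcal{C}$ spans a subspace of $\mathbb{F}_q^n$ of dimension at least $k+\delta$. $B_q(n,k,\delta;\alpha)$ denotes the maximum size of an $\alpha$-$(n,k,\delta)_q^c$ code. *)

(* Defs.v *)
From HB Require Import structures.
From mathcomp Require Import all_boot all_order all_algebra.
Set Implicit Arguments. Unset Strict Implicit. Unset Printing Implicit Defensive.
Import GRing.Theory.
Import VectorInternalTheory.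

(* Over a finite field, the type of
   subspaces is finite; we equip it with the (sub)finType structure inherited
   from its matrix representation, so that codes can be finite sets of
   subspaces. *)
Section FinVspace.
Variable F : finFieldType.
Variable n : nat.
Notation subsp := {vspace 'rV[F]_n}.
HB.instance Definition _ := [Countable of subsp by <:].
HB.instance Definition _ := [Finite of subsp by <:].
End FinVspace.
Notation subsp F n := {vspace 'rV[F]_n}.

Local Open Scope ring_scope.

Definition covering_code (F : finFieldType) (n k delta alpha : nat)
    (C : {set subsp F n}) : bool :=
  [forall U in C, \dim U == k] &&
  [forall S : {set subsp F n}, ((S \subset C) && (#|S| == alpha)%N) ==>
     (k + delta <= \dim (\sum_(U in S) U)%VS)%N].

(* B_q(n,k,delta;alpha): the maximum size of such a code
   (the empty code is always a code, so the max is attained). *)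
Definition B_cov (F : finFieldType) (n k delta alpha : nat) : nat :=
  \max_(C : {set subsp F n} | @covering_code F n k delta alpha C) #|C|.

(* Main.v *)
Require Import Defs.
From mathcomp Require Import all_boot all_order all_algebra zify.
Set Implicit Arguments. Unset Strict Implicit. Unset Printing Implicit Defensive.
Import GRing.Theory.
Local Open Scope ring_scope.

Section Up.
Variable F : finFieldType.
Variable n : nat.
Implicit Types U V W : subsp F n.

Lemma dim_ge1 U (x : 'rV[F]_n) : x != 0 -> x \in U -> (1 <= \dim U)%N.
Proof.
move=> nx xU; rewrite lt0n dimv_eq0; apply: contraNneq nx => U0.
by move: xU; rewrite U0 memv0.
Qed.

Lemma dim3_le4 U V W (x : 'rV[F]_n) : x != 0 -> x \in U -> x \in V -> x \in W ->
  \dim U = 2%N -> \dim V = 2%N -> \dim W = 2%N -> (\dim (U + V + W) <= 4)%N.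
Proof.
move=> nx xU xV xW dU dV dW.
have h1 := dimv_sum_cap U V.
have h2 := dimv_sum_cap (U + V)%VS W.
have c1 : (1 <= \dim (U :&: V))%N by apply: (dim_ge1 nx); rewrite memv_cap xU xV.
have c2 : (1 <= \dim ((U + V) :&: W))%N.
  apply: (dim_ge1 nx); rewrite memv_cap xW andbT.
  by apply: subvP (addvSl U V) _ xU.
rewrite dU dV in h1; rewrite dW in h2; lia.
Qed.

Lemma code_card_le (C : {set subsp F n}) : covering_code 2 3 3 C ->
  (#|C| <= #|{: 'rV[F]_n}| * 2)%N.
Proof.
case/andP=> /forallP dimC /forallP cov.
rewrite -sum1_card (partition_big (fun U : subsp F n => vpick U) predT) //=.
rewrite -sum_nat_const; apply: leq_sum => x _.
rewrite sum1dep_card leqNgt; apply/negP => /card_gt2P [U [V [W [[]]]]].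
rewrite !inE => /andP[UC /eqP xU] /andP[VC /eqP xV] /andP[WC /eqP xW] [nUV nVW nWU].
have dU := dimC U; have dV := dimC V; have dW := dimC W.
rewrite UC in dU; rewrite VC in dV; rewrite WC in dW.
move/eqP: dU => dU; move/eqP: dV => dV; move/eqP: dW => dW.
have nx : x != 0.
  by rewrite -xU vpick0 -dimv_eq0 dU.
have := cov [set U; V; W].
have -> : [set U; V; W] \subset C.
  by apply/subsetP => Y; rewrite !inE => /orP[/orP[/eqP->|/eqP->]|/eqP->].
have -> : #|[set U; V; W]| == 3%N.
  rewrite -setUA cardsU1 cards2 !inE.
  by rewrite negb_or nUV nVW (eq_sym U W) nWU.
move=> /= h.
have h2 : (\dim (\sum_(Y in [set U; V; W]) Y) <= \dim (U + V + W))%N.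
  apply: dimvS; apply/subv_sumP => Y; rewrite !inE => /orP[/orP[/eqP->|/eqP->]|/eqP->].
  - by apply: subv_trans (addvSl _ _); apply: addvSl.
  - by apply: subv_trans (addvSl _ _); apply: addvSr.
  - by apply: addvSr.
have h3 : (\dim (U + V + W) <= 4)%N.
  by apply: (dim3_le4 nx) => //; [rewrite -xU | rewrite -xV | rewrite -xW]; apply: memv_pick.
have := leq_trans h (leq_trans h2 h3); by [].
Qed.
End Up.
Lemma notin_span_coord (F : fieldType) m (X : seq 'rV[F]_m) (v : 'rV[F]_m) (j : 'I_m) :
  v 0 j != 0 -> all (fun x : 'rV[F]_m => x 0 j == 0) X -> v \notin <<X>>%VS.
Proof.
move=> nv hX; apply/negP => /(@coord_span _ _ _ (in_tuple X)) Ev.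
move: nv; rewrite Ev summxE big1 ?eqxx // => i _.
rewrite !mxE; have /eqP -> := (allP hX) _ (mem_nth 0 (ltn_ord i)).
by rewrite mulr0.
Qed.

Section Lo.
Variable k : nat.
Notation F := 'F_2.

Definition ext (a : 'rV[F]_k) (i : nat) : F :=
  oapp (fun j : 'I_k => a 0 j) 0 (insub i).

Lemma ext_ord a (j : 'I_k) : ext a j = a 0 j.
Proof. by rewrite /ext valK. Qed.

Lemma ext_out a i : (k <= i)%N -> ext a i = 0.
Proof. by move=> h; rewrite /ext insubF // ltnNge h. Qed.

Lemma ext_sub a b i : ext (a - b) i = ext a i - ext b i.
Proof. rewrite /ext; case: insubP => [j _ _|_] /=; by rewrite ?mxE ?subr0. Qed.

Definition pv (a : 'rV[F]_k) : 'rV[F]_(k.+3) :=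
  \row_(i < k.+3) (if i == 0%N :> nat then 1 else if i == 1%N :> nat then 0 else ext a (i - 2)).
Definition qv (a : 'rV[F]_k) : 'rV[F]_(k.+3) :=
  \row_(i < k.+3) (if i == 1%N :> nat then 1 else if (i < 3)%N then 0 else ext a (i - 3)).
Definition Ucw (a : 'rV[F]_k) : subsp F k.+3 := <<[:: pv a; qv a]>>%VS.

Definition i0 : 'I_(k.+3) := @Ordinal (k.+3) 0 isT.
Definition i1 : 'I_(k.+3) := @Ordinal (k.+3) 1 isT.

Lemma free_pq a : free [:: pv a; qv a].
Proof.
rewrite free_cons seq1_free; apply/andP; split.
  by apply: (@notin_span_coord _ _ _ _ i0); rewrite /= !mxE ?oner_eq0.
by apply/eqP => /rowP /(_ i1); rewrite !mxE /=; apply/eqP; rewrite oner_eq0.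
Qed.

Lemma dim_Ucw a : \dim (Ucw a) = 2%N.
Proof. by have /eqP := free_pq a. Qed.

Lemma mem2 (m : nat) (x y w : 'rV[F]_m) : w \in <<[:: x; y]>>%VS ->
  exists c0 c1, w = c0 *: x + c1 *: y.
Proof.
rewrite span_cons span_seq1 => /memv_addP [u /vlineP [c0 ->] [v /vlineP [c1 ->] ->]].
by exists c0, c1.
Qed.

Lemma Ucw_inj : injective Ucw.
Proof.
move=> a b E.
have : pv b \in Ucw a by rewrite E memv_span // inE eqxx.
case/mem2 => c0 [c1 Ew].
have h0 := congr1 (fun M : 'rV[F]_(k.+3) => M 0 i0) Ew; have h1 := congr1 (fun M : 'rV[F]_(k.+3) => M 0 i1) Ew.
rewrite /= !mxE /= in h0 h1.
rewrite mulr1 mulr0 addr0 in h0; rewrite mulr0 mulr1 add0r in h1.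
rewrite -h0 -h1 scale1r scale0r addr0 in Ew.
apply/rowP => j; have := congr1 (fun M : 'rV[F]_(k.+3) => M 0 (@Ordinal (k.+3) j.+2 (ltnW (ltn_ord j)))) Ew.
by rewrite /= !mxE /= subn2 /= ext_ord ext_ord.
Qed.
End Lo.
Section Lo2.
Variable k : nat.
Notation F := 'F_2.

Lemma F2_one (c : F) : c != 0 -> c = 1.
Proof. by case: c => [[|[|]]] //= ? _; apply: val_inj. Qed.

Lemma pv_inj : injective (@pv k).
Proof.
move=> a b Ew; apply/rowP => j.
have := congr1 (fun M : 'rV[F]_(k.+3) => M 0 (@Ordinal (k.+3) j.+2 (ltnW (ltn_ord j)))) Ew.
by rewrite /= !mxE /= subn2 /= ext_ord ext_ord.
Qed.

Lemma five (a b c : 'rV[F]_k) (S : {set subsp F k.+3}) :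
  a != b -> b != c -> c != a ->
  Ucw a \in S -> Ucw b \in S -> Ucw c \in S ->
  (5 <= \dim (\sum_(U in S) U)%VS)%N.
Proof.
move=> nab nbc nca Sa Sb Sc.
set Sig := (\sum_(U in S) U)%VS.
have inS x y : Ucw y \in S -> x \in Ucw y -> x \in Sig.
  by move=> Sy; apply: subvP; apply: (sumv_sup (Ucw y)).
have pin y : pv y \in Ucw y by rewrite memv_span // inE eqxx.
have qin y : qv y \in Ucw y by rewrite memv_span // !inE eqxx orbT.
set d := a - b; set e := a - c.
have nd : d != 0 by rewrite subr_eq0.
have [j0 hj0] : exists j, d 0 j != 0.
  apply/existsP; apply: contraTT nd => /existsPn h; rewrite negbK; apply/eqP/rowP => j.
  by rewrite [RHS]mxE; apply/eqP; move: (h j); rewrite negbK.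
pose P j := (d 0 j != 0) || (e 0 j != 0).
have Pj0 : P j0 by rewrite /P hj0.
case: (@arg_maxnP _ j0 P (fun j : 'I_k => nat_of_ord j) Pj0) => H PH maxH.
set iH : 'I_(k.+3) := @Ordinal (k.+3) H.+3 (ltn_ord H).
have hnext (x : 'rV[F]_k) : (x == d) || (x == e) -> ext x H.+1 = 0.
  move=> hx; case: (ltnP H.+1 k) => hk; last by rewrite ext_out.
  rewrite (ext_ord x (Ordinal hk)).
  have nP : ~~ P (Ordinal hk) by apply/negP => /maxH; rewrite /= ltnn.
  move: nP; rewrite /P negb_or !negbK => /andP[/eqP h1 /eqP h2].
  by case/orP: hx => /eqP ->.
have hd : ext d H.+1 = 0 by apply: hnext; rewrite eqxx.
have he : ext e H.+1 = 0 by apply: hnext; rewrite eqxx orbT.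
have [z [zS z0 z1 zH]] : exists z, [/\ z \in Sig, z 0 (i0 k) = 0, z 0 (i1 k) = 0 & z 0 iH != 0].
  case: (boolP (d 0 H != 0)) => hdH.
    exists (qv a - qv b); split.
    - by apply: rpredB; [exact: inS _ _ Sa (qin _ a) | exact: inS _ _ Sb (qin _ b)].
    - by rewrite !mxE /= subrr.
    - by rewrite !mxE /= subrr.
    - by rewrite !mxE /= -ext_sub !subSS subn0 ext_ord.
  have heH : e 0 H != 0 by move: PH; rewrite /P (negbTE hdH).
  exists (qv a - qv c); split.
  - by apply: rpredB; [exact: inS _ _ Sa (qin _ a) | exact: inS _ _ Sc (qin _ c)].
  - by rewrite !mxE /= subrr.
  - by rewrite !mxE /= subrr.
  - by rewrite !mxE /= -ext_sub !subSS subn0 ext_ord.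
set u := pv a - pv b; set v := pv a - pv c.
have uS : u \in Sig by apply: rpredB; [exact: inS _ _ Sa (pin _ a) | exact: inS _ _ Sb (pin _ b)].
have vS : v \in Sig by apply: rpredB; [exact: inS _ _ Sa (pin _ a) | exact: inS _ _ Sc (pin _ c)].
have u0 : u 0 (i0 k) = 0 by rewrite !mxE /= subrr.
have v0 : v 0 (i0 k) = 0 by rewrite !mxE /= subrr.
have u1 : u 0 (i1 k) = 0 by rewrite !mxE /= subrr.
have v1 : v 0 (i1 k) = 0 by rewrite !mxE /= subrr.
have uH : u 0 iH = 0 by rewrite !mxE /= -ext_sub !subSS subn0.
have vH : v 0 iH = 0 by rewrite !mxE /= -ext_sub !subSS subn0.
have pa0 : pv a 0 (i0 k) = 1 by rewrite !mxE.
have qa0 : qv a 0 (i0 k) = 0 by rewrite !mxE.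
have qa1 : qv a 0 (i1 k) = 1 by rewrite !mxE.
have nu : u != 0 by rewrite subr_eq0; apply: contra nab => /eqP /pv_inj ->.
have nv : v != 0 by rewrite subr_eq0; apply: contra nca => /eqP /pv_inj ->.
have fr : free [:: pv a; qv a; z; u; v].
  rewrite free_cons; apply/andP; split.
    apply: (notin_span_coord (j := i0 k)); first by rewrite pa0 oner_eq0.
    by rewrite /= qa0 z0 u0 v0 eqxx.
  rewrite free_cons; apply/andP; split.
    apply: (notin_span_coord (j := i1 k)); first by rewrite qa1 oner_eq0.
    by rewrite /= z1 u1 v1 eqxx.
  rewrite free_cons; apply/andP; split.
    apply: (notin_span_coord (j := iH)); first by [].
    by rewrite /= uH vH eqxx.
  rewrite free_cons seq1_free nv andbT span_seq1; apply/vlineP => [[c' Ec]].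
  case: (eqVneq c' 0) => [c0|/F2_one c1].
    by move: nu; rewrite Ec c0 scale0r eqxx.
  move: Ec; rewrite c1 scale1r /u /v => /addrI /eqP; rewrite eqr_opp => /eqP /pv_inj.
  by move/eqP: nbc.
have d5 : \dim <<[:: pv a; qv a; z; u; v]>>%VS = 5%N by move/eqP: fr.
rewrite -d5; apply: dimvS; apply/span_subvP => x.
rewrite !inE => /orP[/eqP->|/orP[/eqP->|/orP[/eqP->|/orP[/eqP->|/eqP->]]]] //.
- exact: inS _ _ Sa (pin _ a).
- exact: inS _ _ Sa (qin _ a).
Qed.
End Lo2.

Lemma card_rV2 m : #|{: 'rV['F_2]_m}| = (2 ^ m)%N.
Proof. by rewrite card_mx card_Fp // mul1n. Qed.

Lemma code_lb k : exists C : {set subsp 'F_2 k.+3},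
  covering_code 2 3 3 C /\ #|C| = (2 ^ k)%N.
Proof.
exists ((@Ucw k) @: setT); split; last first.
  by rewrite card_imset; [rewrite cardsT card_rV2 | apply: (@Ucw_inj k)].
apply/andP; split.
  by apply/forallP => U; apply/implyP => /imsetP [a _ ->]; rewrite dim_Ucw.
apply/forallP => S; apply/implyP => /andP [/subsetP sub /eqP c3].
have : (2 < #|S|)%N by rewrite c3.
case/card_gt2P => [x [y [z [[xS yS zS] [nxy nyz nzx]]]]].
move: (sub _ xS) (sub _ yS) (sub _ zS) => /imsetP [a _ ea] /imsetP [b _ eb] /imsetP [c _ ec].
subst x y z.
apply: (@five k a b c S) => //.
- by apply: contraNneq nxy => ->.
- by apply: contraNneq nyz => ->.
- by apply: contraNneq nzx => ->.
Qed.

Theorem mainTheorem9 :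
  exists (c1 c2 N : nat), (0 < c1)%N /\ (0 < c2)%N /\
    forall n : nat, (N <= n)%N ->
      (2 ^ n <= c1 * B_cov 'F_2 n 2 3 3)%N /\
      (B_cov 'F_2 n 2 3 3 <= c2 * 2 ^ n)%N.
Proof.
exists 8%N, 2%N, 3%N; split => //; split => // n.
case: n => [|[|[|k]]] // _; split.
  have [C [cC cardC]] := code_lb k.
  have h : (#|C| <= B_cov 'F_2 k.+3 2 3 3)%N.
    by apply: (leq_bigmax_cond C cC).
  rewrite expnS expnS expnS -cardC.
  have -> : (2 * (2 * (2 * #|C|)) = 8 * #|C|)%N by rewrite !mulnA.
  by rewrite leq_mul2l.
apply/bigmax_leqP => C cC.
by rewrite mulnC -card_rV2; apply: code_card_le.
Qed.
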